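(* Let $b\in\mathbb{N}\setminus\{1\}$, $\xi_m\in\{-1,+1\}$ ($m\in\mathbb{Z}_+$) arbitrary, $\phi:\mathbb{R}\to\mathbb{R}$ periodic with period $1$, vanishing on $\mathbb{Z}$, and H\''older continuous with exponent $\gamma\in(0,1]$, and $\psi:(0,\infty)\to(0,\infty)$ submultiplicative with $\psi(b^{-1})\in(0,1)$. Let $f(t)=\sum_{m=0}^\infty \xi_m\psi(b^{-m})\phi(b^mt)$, $t\in[0,1]$, let $\Pi_n:=\{kb^{-n}:k=0,1,\dots,b^n\}$, $n\in\mathbb{N}$, and let $p\ge1$. (i) If $\psi(b^{-1})<b^{-\gamma}$, then $\limsup_{n\to\infty}\frac{RV^p_n(f,\Pi_n)}{b^{p(1-\gamma)n}}<\infty$. (ii) If $\psi(b^{-1})=b^{-\gamma}$, then $\limsup_{n\to\infty}\frac{RV^p_n(f,\Pi_n)}{n^pb^{p(1-\gamma)n}}<\infty$. (iii) If $\psi(b^{-1})>b^{-\gamma}$, then $\limsup_{n\to\infty}\frac{RV^p_n(f,\Pi_n)}{b^{p(1-\beta)n}}<\infty$, where $\beta:=-\log_b(\psi(b^{-1}))\in(0,\gamma)$.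
   Context: $\psi$ submultiplicative: $\psi(xy)\le\psi(x)\psi(y)$ for $x,y>0$. For $g:[0,1]\to\mathbb{R}$, $p\ge1$ and a partition $\mathcal{P}=\{0=t_0<t_1<\dots<t_N=1\}$ of $[0,1]$, the $p^{\mathrm{th}}$-order Riesz variation is $RV^p(g,\mathcal{P}):=\sum_{k=0}^{N-1}\frac{|g(t_{k+1})-g(t_k)|^p}{(t_{k+1}-t_k)^{p-1}}$; for the $b$-adic partition this is $RV^p_n(g,\Pi_n)=b^{n(p-1)}\sum_{k=0}^{b^n-1}|g((k+1)b^{-n})-g(kb^{-n})|^p$. *)

(* Defs.v *)
From Stdlib Require Import Reals.
From Coquelicot Require Import Coquelicot.
Open Scope R_scope.

(* Real power x^a for x >= 0, with the convention 0^a = 0 (a > 0 in all uses). *)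
Definition rpow (x a : R) : R :=
  if Req_EM_T x 0 then 0 else Rpower x a.

Fixpoint fsum (g : nat -> R) (N : nat) : R :=
  match N with
  | O => 0
  | S k => fsum g k + g k
  end.

Definition riesz_var (p : R) (g : R -> R) (t : nat -> R) (N : nat) : R :=
  fsum (fun k => rpow (Rabs (g (t (S k)) - g (t k))) p
                 / rpow (t (S k) - t k) (p - 1)) N.

Definition badic (b n : nat) (k : nat) : R := INR k / INR b ^ n.

Definition RVn (p : R) (g : R -> R) (b n : nat) : R :=
  riesz_var p g (badic b n) (b ^ n)%nat.

Definition submultiplicative (psi : R -> R) : Prop :=
  forall x y, 0 < x -> 0 < y -> psi (x * y) <= psi x * psi y.

Definition holder (phi : R -> R) (gamma : R) : Prop :=
  exists K : R, forall x y, Rabs (phi x - phi y) <= K * rpow (Rabs (x - y)) gamma.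

Definition takagi_f (b : nat) (xi : nat -> R) (psi phi : R -> R) (t : R) : R :=
  Series (fun m => xi m * psi (/ (INR b ^ m)) * phi (INR b ^ m * t)).

(* Main.v *)
Require Import Defs.
From Stdlib Require Import Reals Lra Lia.
From Coquelicot Require Import Coquelicot.
Open Scope R_scope.

Lemma Rpower_pos x y : 0 < Rpower x y.
Proof. unfold Rpower; apply exp_pos. Qed.

Lemma rpow_ge0 x a : 0 <= rpow x a.
Proof. unfold rpow; destruct (Req_EM_T x 0); [lra| left; apply Rpower_pos]. Qed.

Lemma rpow_pos_eq x a : 0 < x -> rpow x a = Rpower x a.
Proof. intros; unfold rpow; destruct (Req_EM_T x 0); [lra|auto]. Qed.

Lemma rpow_le x y a : 0 <= a -> 0 <= x <= y -> rpow x a <= rpow y a.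
Proof. intros Ha [Hx Hxy]. unfold rpow.
 destruct (Req_EM_T x 0).
 - destruct (Req_EM_T y 0); [lra| left; apply Rpower_pos].
 - destruct (Req_EM_T y 0); [lra|]. apply Rle_Rpower_l; lra. Qed.

Lemma Rpower_1_l a : Rpower 1 a = 1.
Proof. unfold Rpower; rewrite ln_1, Rmult_0_r; apply exp_0. Qed.

Lemma rpow_le1 x a : 0 <= a -> 0 <= x <= 1 -> rpow x a <= 1.
Proof. intros. rewrite <- (Rpower_1_l a), <- (rpow_pos_eq 1 a) by lra. apply rpow_le; lra. Qed.

Lemma rpow_mult x y a : 0 <= x -> 0 < y -> rpow (x*y) a = rpow x a * Rpower y a.
Proof. intros Hx Hy. destruct (Req_EM_T x 0) as [->|Hx0].
 - rewrite Rmult_0_l. unfold rpow. destruct (Req_EM_T 0 0); [ring| congruence].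
 - rewrite !rpow_pos_eq by nra. symmetry; apply Rpower_mult_distr; lra. Qed.

Lemma Rpower_inv_base x g : 0 < x -> Rpower (/ x) g = / Rpower x g.
Proof. intros. unfold Rpower. rewrite ln_Rinv by auto. rewrite <- exp_Ropp. f_equal; ring. Qed.

Lemma Rpower_pow_comm x g m : 0 < x -> Rpower (x ^ m) g = (Rpower x g) ^ m.
Proof. intros. rewrite <- Rpower_pow by auto. rewrite <- Rpower_pow by apply Rpower_pos.
 rewrite !Rpower_mult. f_equal; ring. Qed.

Lemma fsum_le g h n : (forall m, (m < n)%nat -> g m <= h m) -> fsum g n <= fsum h n.
Proof. induction n; cbn [fsum]; intros H. lra.
 assert (g n <= h n) by (apply H; lia).
 assert (fsum g n <= fsum h n) by (apply IHn; intros; apply H; lia). lra. Qed.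

Lemma fsum_abs g n : Rabs (fsum g n) <= fsum (fun m => Rabs (g m)) n.
Proof. induction n; cbn [fsum]. rewrite Rabs_R0; lra.
 eapply Rle_trans. apply Rabs_triang. lra. Qed.

Lemma fsum_scal c g n : fsum (fun m => c * g m) n = c * fsum g n.
Proof. induction n; cbn [fsum]. ring. rewrite IHn; ring. Qed.

Lemma fsum_const c n : fsum (fun _ => c) n = INR n * c.
Proof. induction n; cbn [fsum]. simpl; ring. rewrite IHn, S_INR; ring. Qed.

Lemma fsum_geom q n : (q - 1) * fsum (fun m => q ^ m) n = q ^ n - 1.
Proof. induction n; cbn [fsum]. simpl; ring. rewrite Rmult_plus_distr_l, IHn. simpl; ring. Qed.

Lemma fsum_geom1 n : fsum (fun m => 1 ^ m) n = INR n.
Proof. induction n; cbn [fsum]. simpl; ring. rewrite IHn, pow1, S_INR; ring. Qed.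

Lemma fsum_shift w n : fsum w (S n) = w 0%nat + fsum (fun k => w (S k)) n.
Proof. induction n. cbn; ring.
 change (fsum w (S (S n))) with (fsum w (S n) + w (S n)). rewrite IHn. cbn [fsum]. ring. Qed.

Lemma Series_zero : Series (fun _ => 0) = 0.
Proof. pose proof (Series_scal_l 0 (fun _ => 0)) as H. cbv beta in H.
 rewrite (Series_ext (fun _ => 0) (fun _ => 0 * 0)) by (intros; ring). rewrite H; ring. Qed.

Lemma Series_ev0 (w : nat -> R) n : ex_series w -> (forall m, (n <= m)%nat -> w m = 0) ->
  Series w = fsum w n.
Proof.
  revert w; induction n; intros w Hex Hz.
  - cbn [fsum]. rewrite (Series_ext w (fun _ => 0)) by (intros; apply Hz; lia). apply Series_zero.
  - rewrite Series_incr_1 by exact Hex.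
    rewrite (IHn (fun k => w (S k))).
    + rewrite fsum_shift. reflexivity.
    + apply (proj1 (ex_series_incr_1 w)); exact Hex.
    + intros m Hm; apply Hz; lia.
Qed.

Lemma psi_bound (psi : R -> R) (B : R) : 1 < B -> (forall x, 0 < x -> 0 < psi x) ->
  submultiplicative psi ->
  forall m, psi (/ B ^ m) <= (psi 1 + 1) * psi (/ B) ^ m.
Proof.
  intros HB Hpos Hsub. induction m.
  - simpl. rewrite Rinv_1. assert (0 < psi 1) by (apply Hpos; lra). lra.
  - simpl pow. rewrite Rinv_mult.
    eapply Rle_trans. apply Hsub. apply Rinv_0_lt_compat; lra.
    apply Rinv_0_lt_compat, pow_lt; lra.
    assert (0 < psi (/B)) by (apply Hpos, Rinv_0_lt_compat; lra).
    apply Rle_trans with (psi (/B) * ((psi 1 + 1) * psi (/B)^m)).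
    apply Rmult_le_compat_l; lra. right; ring.
Qed.

Lemma phi_bound phi gamma K : (forall z, phi (IZR z) = 0) -> 0 < gamma ->
 (forall x y, Rabs (phi x - phi y) <= K * rpow (Rabs (x - y)) gamma) ->
 forall x, Rabs (phi x) <= Rabs K.
Proof.
 intros Hz Hg H x. specialize (H x (IZR (up x))). rewrite Hz, Rminus_0_r in H.
 destruct (archimed x) as [H1 H2].
 assert (rpow (Rabs (x - IZR (up x))) gamma <= 1).
 { apply rpow_le1; [lra| split; [apply Rabs_pos| rewrite Rabs_minus_sym, Rabs_right; lra]]. }
 assert (0 <= rpow (Rabs (x - IZR (up x))) gamma) by apply rpow_ge0.
 eapply Rle_trans. exact H.
 apply Rle_trans with (Rabs K * rpow (Rabs (x - IZR (up x))) gamma).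
 apply Rmult_le_compat_r; [auto| apply Rle_abs].
 pose proof (Rabs_pos K). nra.
Qed.

Lemma int_point b n m j : (n <= m)%nat -> 0 < INR b ->
  INR b ^ m * (INR j / INR b ^ n) = INR (j * b ^ (m - n)).
Proof. intros Hnm Hb. rewrite mult_INR, pow_INR.
 replace m with ((m - n) + n)%nat at 1 by lia. rewrite pow_add. field. apply pow_nonzero; lra. Qed.

Lemma delta_bound b xi phi psi gamma K :
 (2 <= b)%nat -> (forall m, xi m = 1 \/ xi m = -1) -> (forall z, phi (IZR z) = 0) -> 0 < gamma ->
 (forall x y, Rabs (phi x - phi y) <= K * rpow (Rabs (x - y)) gamma) ->
 (forall x, 0 < x -> 0 < psi x) -> submultiplicative psi -> psi (/ INR b) < 1 ->
 forall n k, Rabs (takagi_f b xi psi phi (badic b n (S k)) - takagi_f b xi psi phi (badic b n k))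
   <= (psi 1 + 1) * Rabs K * / (Rpower (INR b) gamma) ^ n
      * fsum (fun m => (psi (/INR b) * Rpower (INR b) gamma) ^ m) n.
Proof.
  intros Hb Hxi Hz Hg Hhol Hpos Hsub Ha1 n k.
  assert (HB : 1 < INR b).
  { apply le_INR in Hb. simpl in Hb. lra. }
  assert (Hxa : forall m, Rabs (xi m) = 1).
  { intros m; destruct (Hxi m) as [-> | ->]; unfold Rabs; destruct Rcase_abs; lra. }
  pose proof (psi_bound psi (INR b) HB Hpos Hsub) as Hpb.
  pose proof (phi_bound phi gamma K Hz Hg Hhol) as Hphb.
  assert (Ha : 0 < psi (/ INR b)) by (apply Hpos, Rinv_0_lt_compat; lra).
  assert (Hex : forall t, ex_series (fun m => xi m * psi (/ INR b ^ m) * phi (INR b ^ m * t))).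
  { intros t. apply (@ex_series_le R_AbsRing R_CompleteNormedModule _ (fun m => ((psi 1 + 1) * Rabs K) * psi (/ INR b) ^ m)).
    - intros m. change (norm ?x) with (Rabs x). rewrite !Rabs_mult, Hxa.
      rewrite (Rabs_pos_eq (psi _)) by (left; apply Hpos, Rinv_0_lt_compat, pow_lt; lra).
      specialize (Hpb m). specialize (Hphb (INR b ^ m * t)).
      pose proof (Rabs_pos (phi (INR b ^ m * t))).
      assert (0 < psi (/ INR b ^ m)) by (apply Hpos, Rinv_0_lt_compat, pow_lt; lra).
      apply Rle_trans with ((psi 1 + 1) * psi (/ INR b) ^ m * Rabs K).
      + rewrite Rmult_1_l. apply Rmult_le_compat; lra.
      + right; ring.
    - apply (ex_series_scal_l ((psi 1 + 1) * Rabs K) (fun n => psi (/ INR b) ^ n)).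
      apply ex_series_geom. rewrite Rabs_pos_eq by lra.
      exact Ha1. }
  assert (HBn : 0 < INR b ^ n) by (apply pow_lt; lra).
  unfold takagi_f. rewrite <- Series_minus by apply Hex.
  rewrite (Series_ev0 _ n).
  2: { exact (ex_series_minus _ _ (Hex _) (Hex _)). }
  2: { intros m Hm. unfold badic.
       rewrite (int_point b n m (S k)), (int_point b n m k) by (auto; lra).
       rewrite !INR_IZR_INZ, !Hz. ring. }
  eapply Rle_trans; [apply fsum_abs|].
  rewrite <- fsum_scal. apply fsum_le. intros m Hm.
  rewrite <- Rmult_minus_distr_l, !Rabs_mult, Hxa.
  assert (Hpm : 0 < psi (/ INR b ^ m)) by (apply Hpos, Rinv_0_lt_compat, pow_lt; lra).
  rewrite (Rabs_pos_eq (psi _)) by lra.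
  assert (Hd : INR b ^ m * badic b n (S k) - INR b ^ m * badic b n k = INR b ^ m * / INR b ^ n).
  { unfold badic. rewrite S_INR. field. lra. }
  assert (Hdp : 0 < INR b ^ m * / INR b ^ n).
  { apply Rmult_lt_0_compat. apply pow_lt; lra. apply Rinv_0_lt_compat; lra. }
  pose proof (Hhol (INR b ^ m * badic b n (S k)) (INR b ^ m * badic b n k)) as H.
  rewrite Hd, (Rabs_pos_eq (INR b ^ m * _)), rpow_pos_eq in H by lra.
  rewrite <- Rpower_mult_distr in H by (try apply Rinv_0_lt_compat; apply pow_lt; lra).
  rewrite Rpower_inv_base, !Rpower_pow_comm in H by lra.
  set (s := Rpower (INR b) gamma) in *.
  set (a := psi (/ INR b)) in *.
  assert (Hs : 0 < s) by apply Rpower_pos.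
  assert (HK : K * (s ^ m * / s ^ n) <= Rabs K * (s ^ m * / s ^ n)).
  { apply Rmult_le_compat_r. left; apply Rmult_lt_0_compat. apply pow_lt; lra.
    apply Rinv_0_lt_compat, pow_lt; lra. apply Rle_abs. }
  pose proof (Rabs_pos (phi (INR b ^ m * badic b n (S k)) - phi (INR b ^ m * badic b n k))).
  specialize (Hpb m).
  apply Rle_trans with ((psi 1 + 1) * a ^ m * (Rabs K * (s ^ m * / s ^ n))).
  - rewrite Rmult_1_l. apply Rmult_le_compat; lra.
  - rewrite Rpow_mult_distr. right; ring.
Qed.

Lemma RV_bound p g b n D : (2 <= b)%nat -> 1 <= p -> 0 <= D ->
  (forall k, Rabs (g (badic b n (S k)) - g (badic b n k)) <= D) ->
  RVn p g b n <= rpow D p * Rpower (INR b) (INR n * p).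
Proof.
  intros Hb Hp HD H.
  assert (HB : 1 < INR b) by (apply le_INR in Hb; simpl in Hb; lra).
  assert (HBn : 0 < INR b ^ n) by (apply pow_lt; lra).
  unfold RVn, riesz_var.
  assert (Hd : forall k, badic b n (S k) - badic b n k = / INR b ^ n).
  { intros k; unfold badic; rewrite S_INR; field; lra. }
  eapply Rle_trans.
  { apply fsum_le with (h := fun _ => rpow D p * Rpower (INR b) (INR n * (p - 1))).
    intros m _. rewrite Hd, (rpow_pos_eq (/ INR b ^ n)) by (apply Rinv_0_lt_compat; lra).
    rewrite Rpower_inv_base by lra. rewrite <- Rpower_pow by lra. rewrite Rpower_mult.
    unfold Rdiv; rewrite Rinv_inv. apply Rmult_le_compat_r. left; apply Rpower_pos.
    apply rpow_le; [lra| split; [apply Rabs_pos| apply H]]. }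
  rewrite fsum_const, pow_INR, <- Rpower_pow by lra.
  replace (INR n * p) with (INR n + INR n * (p - 1)) by ring.
  rewrite (Rpower_plus (INR n)). right; ring.
Qed.

Lemma div_le x y e : 0 < y -> x <= e * y -> x / y <= e.
Proof. intros. apply (Rmult_le_reg_r y); auto. unfold Rdiv.
 rewrite Rmult_assoc, Rinv_l by lra. lra. Qed.

Lemma limsup_bounded u M : (forall n, u n <= M) -> Rbar_lt (LimSup_seq u) p_infty.
Proof. intros H. eapply Rbar_le_lt_trans.
 - assert (Hl := LimSup_le u (fun _ => M)). rewrite LimSup_seq_const in Hl. apply Hl.
   exists 0%nat; intros; apply H.
 - simpl; trivial.
Qed.

Lemma case_helper (b : nat) p g E y (n : nat) : (2 <= b)%nat -> 1 <= p -> 0 <= E ->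
  (forall k, Rabs (g (badic b n (S k)) - g (badic b n k)) <= E * Rpower (INR b) y) ->
  RVn p g b n / Rpower (INR b) (y * p + INR n * p) <= rpow E p.
Proof.
  intros Hb Hp HE H. apply div_le. apply Rpower_pos.
  eapply Rle_trans. apply (RV_bound p g b n (E * Rpower (INR b) y)); auto.
  pose proof (Rpower_pos (INR b) y). nra.
  rewrite rpow_mult by (auto; apply Rpower_pos). rewrite Rpower_mult, Rpower_plus. right; ring.
Qed.

Lemma rpow0 p : rpow 0 p = 0.
Proof. unfold rpow; destruct (Req_EM_T 0 0); [reflexivity| congruence]. Qed.

Lemma le_div x y e : 0 < y -> x / y <= e -> x <= e * y.
Proof. intros Hy H. replace x with ((x / y) * y) by (field; lra).
 apply Rmult_le_compat_r; lra. Qed.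

Theorem theorem4p2
  (b : nat) (xi : nat -> R) (phi psi : R -> R) (gamma p : R)
  (Hb : (2 <= b)%nat)
  (Hxi : forall m, xi m = 1 \/ xi m = -1)
  (Hper : forall x, phi (x + 1) = phi x)
  (Hzero : forall z : Z, phi (IZR z) = 0)
  (Hgamma : 0 < gamma <= 1)
  (Hhol : holder phi gamma)
  (Hpsipos : forall x, 0 < x -> 0 < psi x)
  (Hsub : submultiplicative psi)
  (Hpsib : 0 < psi (/ INR b) < 1)
  (Hp : 1 <= p) :
  let f := takagi_f b xi psi phi in
  (psi (/ INR b) < Rpower (INR b) (- gamma) ->
     Rbar_lt (LimSup_seq (fun n =>
       RVn p f b n / Rpower (INR b) (p * (1 - gamma) * INR n))) p_infty) /\
  (psi (/ INR b) = Rpower (INR b) (- gamma) ->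
     Rbar_lt (LimSup_seq (fun n =>
       RVn p f b n / (rpow (INR n) p * Rpower (INR b) (p * (1 - gamma) * INR n))))
       p_infty) /\
  (Rpower (INR b) (- gamma) < psi (/ INR b) ->
     let beta := - (ln (psi (/ INR b)) / ln (INR b)) in
     0 < beta < gamma /\
     Rbar_lt (LimSup_seq (fun n =>
       RVn p f b n / Rpower (INR b) (p * (1 - beta) * INR n))) p_infty).
Proof.
  intros f.
  destruct Hhol as [K HK].
  assert (HB : 1 < INR b) by (apply le_INR in Hb; simpl in Hb; lra).
  pose proof (delta_bound b xi phi psi gamma K Hb Hxi Hzero (proj1 Hgamma) HK Hpsipos Hsub
    (proj2 Hpsib)) as HD.
  try fold f in HD.
  set (a := psi (/ INR b)) in *.
  set (s := Rpower (INR b) gamma) in *.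
  set (C := psi 1 + 1) in *.
  assert (Hs : 1 < s).
  { unfold s; rewrite <- (Rpower_O (INR b)) by lra; apply Rpower_lt; lra. }
  assert (HC : 0 < C) by (unfold C; assert (0 < psi 1) by (apply Hpsipos; lra); lra).
  assert (HKa := Rabs_pos K).
  assert (Hinvs : Rpower (INR b) (- gamma) = / s) by (apply Rpower_Ropp).
  assert (Hsn : forall n, / s ^ n = Rpower (INR b) (- (gamma * INR n))).
  { intros n. rewrite Rpower_Ropp, <- Rpower_mult. rewrite Rpower_pow. reflexivity.
    apply Rpower_pos. }
  assert (Hsn0 : forall n, 0 < / s ^ n) by (intros; apply Rinv_0_lt_compat, pow_lt; lra).
  destruct Hpsib as [Ha Ha1].
  split; [|split].
  - intros Hlt.
    assert (Hq : a * s < 1).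
    { rewrite Hinvs in Hlt. apply (Rmult_lt_compat_r s) in Hlt; [|lra].
      rewrite Rinv_l in Hlt; lra. }
    assert (Hq0 : 0 < a * s) by nra.
    apply (limsup_bounded _ (rpow (C * Rabs K / (1 - a * s)) p)).
    intros n.
    replace (p * (1 - gamma) * INR n) with ((- (gamma * INR n)) * p + INR n * p) by ring.
    apply case_helper; auto.
    + unfold Rdiv; apply Rmult_le_pos; [nra | left; apply Rinv_0_lt_compat; lra].
    + intros k. eapply Rle_trans. apply HD. rewrite <- Hsn.
      pose proof (fsum_geom (a * s) n) as Hg.
      set (G := fsum (fun m => (a * s) ^ m) n) in *.
      assert (0 < (a * s) ^ n) by (apply pow_lt; lra).
      assert (HG : G * (1 - a * s) <= 1) by nra.
      assert (HG2 : G <= / (1 - a * s)).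
      { apply (Rmult_le_reg_r (1 - a * s)); [lra|]. rewrite Rinv_l; lra. }
      specialize (Hsn0 n).
      assert (0 <= C * Rabs K * / s ^ n) by (apply Rmult_le_pos; nra).
      apply Rle_trans with (C * Rabs K * / s ^ n * / (1 - a * s)).
      * apply Rmult_le_compat_l; auto.
      * right; unfold Rdiv; ring.
  - intros Heq.
    assert (Hq : a * s = 1) by (rewrite Heq, Hinvs; field; lra).
    apply (limsup_bounded _ (rpow (C * Rabs K) p)).
    intros n. destruct n as [|n].
    + change (INR 0) with 0. rewrite rpow0, Rmult_0_l. unfold Rdiv; rewrite Rinv_0, Rmult_0_r.
      apply rpow_ge0.
    + assert (HN : 0 < INR (S n)) by (apply lt_0_INR; lia).
      rewrite (rpow_pos_eq (INR (S n))) by lra.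
      assert (H1 : RVn p f b (S n) / Rpower (INR b) ((- (gamma * INR (S n))) * p + INR (S n) * p)
                   <= rpow (C * Rabs K * INR (S n)) p).
      { apply case_helper; auto. apply Rmult_le_pos; nra.
        intros k. eapply Rle_trans. apply HD. rewrite <- Hsn, Hq, fsum_geom1. right; ring. }
      rewrite rpow_mult in H1 by (auto; nra).
      apply le_div in H1; [|apply Rpower_pos].
      apply div_le. apply Rmult_lt_0_compat; apply Rpower_pos.
      replace (p * (1 - gamma) * INR (S n)) with ((- (gamma * INR (S n))) * p + INR (S n) * p) by ring.
      rewrite <- Rmult_assoc. exact H1.
  - intros Hgt beta.
    assert (HlnB : 0 < ln (INR b)) by (rewrite <- ln_1; apply ln_increasing; lra).
    assert (Hlna : ln a < 0) by (rewrite <- ln_1; apply ln_increasing; lra).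
    assert (Hab : Rpower (INR b) (- beta) = a).
    { unfold beta, Rpower. rewrite Ropp_involutive.
      replace (ln a / ln (INR b) * ln (INR b)) with (ln a) by (field; lra). apply exp_ln; lra. }
    assert (Hq : 1 < a * s).
    { rewrite Hinvs in Hgt. apply (Rmult_lt_compat_r s) in Hgt; [|lra].
      rewrite Rinv_l in Hgt; lra. }
    split.
    + split.
      * unfold beta. assert (0 < / ln (INR b)) by (apply Rinv_0_lt_compat; lra).
        unfold Rdiv. nra.
      * rewrite <- Hab in Hgt. apply ln_increasing in Hgt; [|apply Rpower_pos].
        rewrite !ln_Rpower in Hgt. nra.
    + apply (limsup_bounded _ (rpow (C * Rabs K / (a * s - 1)) p)).
      intros n.
      replace (p * (1 - beta) * INR n) with ((- (beta * INR n)) * p + INR n * p) by ring.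
      apply case_helper; auto.
      * unfold Rdiv; apply Rmult_le_pos; [nra | left; apply Rinv_0_lt_compat; lra].
      * intros k. eapply Rle_trans. apply HD.
        assert (Han : Rpower (INR b) (- (beta * INR n)) = a ^ n).
        { rewrite <- Rpower_pow by lra. rewrite <- Hab, Rpower_mult. f_equal; ring. }
        rewrite Han.
        pose proof (fsum_geom (a * s) n) as Hg.
        set (G := fsum (fun m => (a * s) ^ m) n) in *.
        assert (0 < (a * s) ^ n) by (apply pow_lt; lra).
        assert (HG : G * (a * s - 1) <= (a * s) ^ n) by nra.
        assert (HG2 : G <= (a * s) ^ n / (a * s - 1)).
        { apply (Rmult_le_reg_r (a * s - 1)); [lra|]. unfold Rdiv.
          rewrite Rmult_assoc, Rinv_l; lra. }
        specialize (Hsn0 n).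
        assert (0 <= C * Rabs K * / s ^ n) by (apply Rmult_le_pos; nra).
        apply Rle_trans with (C * Rabs K * / s ^ n * ((a * s) ^ n / (a * s - 1))).
        -- apply Rmult_le_compat_l; auto.
        -- rewrite Rpow_mult_distr. right. field. split; [lra|]. apply pow_nonzero; lra.
Qed.
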